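(* Let $\langle \mathscr{A} \mid \mathscr{R} \rangle$ be a $C(4)$ equivalence presentation. Then the monoid presented is left cancellative if and only if $\mathscr{R}$ contains no relation of the form $(ar, as)$ where $a \in \mathscr{A}$ and $r, s \in \mathscr{A}^*$ with $r \neq s$.
   Context: A monoid presentation $\langle \mathscr{A} \mid \mathscr{R} \rangle$ consists of an alphabet $\mathscr{A}$ and a set $\mathscr{R} \subseteq \mathscr{A}^* \times \mathscr{A}^*$ of relations; the monoid presented is $\mathscr{A}^*$ modulo the smallest congruence containing $\mathscr{R}$. A relation word is a word occurring as one side of a relation. A piece is a word which occurs as a factor of two distinct relation words, or in two different (possibly overlapping) positions within one relation word; the empty word is always a piece. The presentation is $C(n)$ if no relation word can be written as a product of strictly fewer than $n$ pieces. It is an equivalence presentation if $\mathscr{R}$ is an equivalence relation on the set of relation words (reflexive on relation words, symmetric and transitive). *)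

(* Defs.v *)
From mathcomp Require Import all_boot.
Set Implicit Arguments. Unset Strict Implicit. Unset Printing Implicit Defensive.

(* A presentation <A | R> is given by an alphabet (any eqType A) and a
   (possibly infinite) set of relations R, a Prop-valued relation on words. *)
Definition presentation (A : eqType) := seq A -> seq A -> Prop.

Definition rel_word (A : eqType) (R : presentation A) (w : seq A) : Prop :=
  exists v, R w v \/ R v w.

Definition occurs_at (A : eqType) (p r : seq A) (i : nat) : Prop :=
  exists x y, r = x ++ p ++ y /\ size x = i.

Definition piece (A : eqType) (R : presentation A) (p : seq A) : Prop :=
  p = [::] \/
  exists r1 r2 i j, rel_word R r1 /\ rel_word R r2 /\
    occurs_at p r1 i /\ occurs_at p r2 j /\ (r1 <> r2 \/ i <> j).

Definition C_cond (A : eqType) (R : presentation A) (n : nat) : Prop :=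
  forall r, rel_word R r ->
    ~ (exists ps : seq (seq A),
         size ps < n /\ (forall q, q \in ps -> piece R q) /\ flatten ps = r).

Definition equivalence_presentation (A : eqType) (R : presentation A) : Prop :=
  (forall w, rel_word R w -> R w w) /\
  (forall u v, R u v -> R v u) /\
  (forall u v w, R u v -> R v w -> R u w).

Inductive cong (A : eqType) (R : presentation A) : seq A -> seq A -> Prop :=
| cong_step u v x y : R x y -> cong R (u ++ x ++ v) (u ++ y ++ v)
| cong_refl w : cong R w w
| cong_sym u v : cong R u v -> cong R v u
| cong_trans u v w : cong R u v -> cong R v w -> cong R u w.

Definition left_cancellative (A : eqType) (R : presentation A) : Prop :=
  forall w u v, cong R (w ++ u) (w ++ v) -> cong R u v.

(* Main.v *)
Require Import Defs.
From mathcomp Require Import all_boot.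
From Stdlib Require Import Classical.

Set Implicit Arguments. Unset Strict Implicit. Unset Printing Implicit Defensive.

Definition stp (A : eqType) (R : presentation A) (w w' : seq A) : Prop :=
  exists u v x y, R x y /\ w = u ++ x ++ v /\ w' = u ++ y ++ v.

Inductive Rk (A : eqType) (R : presentation A) (w : seq A) : nat -> seq A -> Prop :=
| Rk_refl n : Rk R w n w
| Rk_step n w1 w2 : Rk R w n w1 -> stp R w1 w2 -> Rk R w n.+1 w2.

Lemma Rk_mono (A : eqType) (R : presentation A) w n w' :
  Rk R w n w' -> forall m, n <= m -> Rk R w m w'.
Proof.
elim=> {n w'} [n|n w1 w2 _ IH Hs] m Hm; first by constructor.
case: m Hm => [//|m] Hm. exact: Rk_step (IH m Hm) Hs.
Qed.

Lemma Rk_cons (A : eqType) (R : presentation A) n w w1 w2 :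
  stp R w w1 -> Rk R w1 n w2 -> Rk R w n.+1 w2.
Proof.
move=> Hs H; elim: H => {n w2} [n|n w2 w3 _ IH Hs2].
- exact: Rk_step (Rk_refl _ _ _) Hs.
- exact: Rk_step IH Hs2.
Qed.

Lemma Rk_inv_first (A : eqType) (R : presentation A) w n w2 :
  Rk R w n w2 -> w = w2 \/ exists k w1, n = k.+1 /\ stp R w w1 /\ Rk R w1 k w2.
Proof.
elim=> {n w2} [n|n w1 w2 _ IH Hs]; first by left.
right; case: IH => [e|[k [w' [-> [Hs' H']]]]].
- rewrite -e in Hs; by exists n, w2; split => //; split => //; constructor.
- exists k.+1, w'; split => //; split => //; exact: Rk_step H' Hs.
Qed.

Lemma stp_sym (A : eqType) (R : presentation A) w w' :
  (forall u v, R u v -> R v u) -> stp R w w' -> stp R w' w.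
Proof.
move=> Hs [u [v [x [y [Hr [-> ->]]]]]].
by exists u, v, y, x; split => //; apply: Hs.
Qed.

Lemma Rk_sym (A : eqType) (R : presentation A) w n w' :
  (forall u v, R u v -> R v u) -> Rk R w n w' -> Rk R w' n w.
Proof.
move=> Hsy; elim=> {n w'} [n|n w1 w2 _ IH Hs]; first by constructor.
exact: Rk_cons (stp_sym Hsy Hs) IH.
Qed.

Lemma Rk_trans (A : eqType) (R : presentation A) w1 m w2 n w3 :
  Rk R w1 m w2 -> Rk R w2 n w3 -> Rk R w1 (m + n) w3.
Proof.
move=> H1 H2; elim: H2 => {n w3} [n|n w3 w4 _ IH Hs].
- apply: Rk_mono H1 _ _; exact: leq_addr.
- rewrite addnS; exact: Rk_step IH Hs.
Qed.

Lemma stp_ctx (A : eqType) (R : presentation A) w w' p s :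
  stp R w w' -> stp R (p ++ w ++ s) (p ++ w' ++ s).
Proof.
move=> [u [v [x [y [Hr [-> ->]]]]]].
exists (p ++ u), (v ++ s), x, y; split => //; by rewrite !catA.
Qed.

Lemma Rk_ctx (A : eqType) (R : presentation A) w n w' p s :
  Rk R w n w' -> Rk R (p ++ w ++ s) n (p ++ w' ++ s).
Proof.
elim=> {n w'} [n|n w1 w2 _ IH Hs]; first by constructor.
exact: Rk_step IH (stp_ctx p s Hs).
Qed.

Lemma Rk_pre (A : eqType) (R : presentation A) w n w' p :
  Rk R w n w' -> Rk R (p ++ w) n (p ++ w').
Proof. by move=> H; have := Rk_ctx p [::] H; rewrite !cats0. Qed.

Lemma cong_Rk (A : eqType) (R : presentation A) u v :
  (forall u v, R u v -> R v u) -> cong R u v -> exists n, Rk R u n v.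
Proof.
move=> Hsy; elim=> {u v}.
- move=> u v x y Hr; exists 1; apply: Rk_step (Rk_refl _ _ 0) _.
  by exists u, v, x, y.
- by move=> w; exists 0; constructor.
- by move=> u v _ [n Hn]; exists n; apply: Rk_sym.
- by move=> u v w _ [m Hm] _ [n Hn]; exists (m + n); apply: Rk_trans Hm Hn.
Qed.

Lemma Rk_cong (A : eqType) (R : presentation A) u n v :
  Rk R u n v -> cong R u v.
Proof.
elim=> {n v} [n|n w1 w2 _ IH [x [y [s [t [Hr [e1 e2]]]]]]]; first exact: cong_refl.
rewrite e1 in IH; rewrite e2; apply: cong_trans IH _; exact: cong_step.
Qed.

Lemma relR (A : eqType) (R : presentation A) x y :
  R x y -> rel_word R x /\ rel_word R y.
Proof. by move=> H; split; [exists y; left | exists x; right]. Qed.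

Lemma piece_of (A : eqType) (R : presentation A) r1 r2 x1 y1 x2 y2 p :
  rel_word R r1 -> rel_word R r2 -> r1 = x1 ++ p ++ y1 -> r2 = x2 ++ p ++ y2 ->
  (r1 <> r2 \/ size x1 <> size x2) -> piece R p.
Proof.
move=> h1 h2 e1 e2 hd; right; exists r1, r2, (size x1), (size x2).
split => //; split => //; split; first by exists x1, y1.
by split => //; exists x2, y2.
Qed.

Lemma C1 (A : eqType) (R : presentation A) r :
  C_cond R 4 -> rel_word R r -> ~ piece R r.
Proof.
move=> HC Hr Hp; apply: (HC r Hr); exists [:: r]; split => //; split.
- by move=> q; rewrite inE => /eqP ->.
- by rewrite /= cats0.
Qed.

Lemma C2 (A : eqType) (R : presentation A) r p1 p2 :
  C_cond R 4 -> rel_word R r -> piece R p1 -> piece R p2 -> r = p1 ++ p2 -> False.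
Proof.
move=> HC Hr H1 H2 e; apply: (HC r Hr); exists [:: p1; p2]; split => //; split.
- by move=> q; rewrite !inE => /orP [] /eqP ->.
- by rewrite /= cats0.
Qed.

Lemma C0 (A : eqType) (R : presentation A) r :
  C_cond R 4 -> rel_word R r -> r <> [::].
Proof. by move=> HC Hr e; apply: (HC r Hr); exists [::]. Qed.

Lemma rel_in_rel (A : eqType) (R : presentation A) t y x s :
  C_cond R 4 -> rel_word R t -> rel_word R y -> y = x ++ t ++ s -> x = [::] /\ s = [::].
Proof.
move=> HC Ht Hy e.
case: x e => [|c x] e.
- case: (eqVneq t y) => [ety|nty].
  + split => //; apply/size0nil.
    have := congr1 size e; rewrite /= size_cat -ety => /eqP.
    by rewrite -{1}(addn0 (size t)) eqn_add2l => /eqP <-.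
  + exfalso; apply: (C1 HC Ht).
    apply: (piece_of (x1 := [::]) (y1 := [::]) Ht Hy _ e); first by rewrite cats0.
    by left; apply/eqP.
- exfalso; apply: (C1 HC Ht).
  apply: (piece_of (x1 := [::]) (y1 := [::]) Ht Hy _ e); first by rewrite cats0.
  by right.
Qed.

Lemma catsplit (T : Type) (x1 y1 x2 y2 : seq T) :
  x1 ++ y1 = x2 ++ y2 ->
  (exists m, x2 = x1 ++ m /\ y1 = m ++ y2) \/ (exists m, x1 = x2 ++ m /\ y2 = m ++ y1).
Proof.
elim: x1 x2 => [|a x1 IH] x2 /= e; first by left; exists x2.
case: x2 e => [|b x2] /= e; first by right; exists (a :: x1).
case: e => -> e; case: (IH _ e) => [[m [-> ->]]|[m [-> ->]]].
- by left; exists m.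
- by right; exists m.
Qed.

Definition INV (A : eqType) (R : presentation A) n :=
  forall y b w, rel_word R y -> Rk R (y ++ b) n w ->
    exists y' z q g, R y y' /\ y' = z ++ q /\ w = z ++ g /\ piece R q /\
                     Rk R (q ++ b) n g.

Definition CAN (A : eqType) (R : presentation A) n :=
  forall (a : A) u v, Rk R (a :: u) n (a :: v) -> Rk R u n v.

Lemma canw (A : eqType) (R : presentation A) n :
  CAN R n -> forall p u v, Rk R (p ++ u) n (p ++ v) -> Rk R u n v.
Proof. move=> HC; elim=> [|a p IH] u v /= H; first exact: H.
by apply: IH; apply: (HC a). Qed.

Lemma cat_injl (T : Type) (s a b : seq T) : s ++ a = s ++ b -> a = b.
Proof. by elim: s => [//|c s IH] /= [] /IH. Qed.

Lemma inv_gen (A : eqType) (R : presentation A) (HE : equivalence_presentation R)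
  (HC : C_cond R 4) n (IH : forall k, k < n -> INV R k /\ CAN R k) y b m w :
  rel_word R y -> Rk R (y ++ b) m w -> m <= n ->
  exists y' z q g, R y y' /\ y' = z ++ q /\ w = z ++ g /\ piece R q /\
                   Rk R (q ++ b) m g.
Proof.
case: HE => [Hrf [Hsy Htr]] Hy H.
elim: H => {m w} [m|m w1 w2 H1 IH1 Hs] Hmn.
- exists y, y, [::], b; split; first exact: Hrf.
  rewrite cats0; split => //; split => //; split; first by left.
  constructor.
- have [INVm CANm] := IH m Hmn.
  have := IH1 (ltnW Hmn) => -[y' [z [q [g [Hyy' [Ey' [Ew1 [Pq Hg]]]]]]]].
  case: Hs => [al [de [t [t' [Rt [Ew1' Ew2]]]]]].
  have [Ht Ht'] := relR Rt.
  have Hy' : rel_word R y' by case: (relR Hyy').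
  rewrite Ew2; rewrite Ew1 in Ew1'.
  case: (catsplit Ew1') => [[m1 [Eal Eg]] | [m1 [Ez Etd]]].
  + exists y', z, q, (m1 ++ t' ++ de); split => //; split => //.
    split; first by rewrite Eal -catA.
    split => //; apply: Rk_step Hg _; rewrite Eg.
    by exists m1, de, t, t'.
  + case: (catsplit Etd) => [[m2 [Em1 Ede]] | [t2 [Et Eg]]].
    * have [Eal Eq] : al = [::] /\ m2 ++ q = [::].
      { apply: (rel_in_rel HC Ht Hy'). by rewrite Ey' Ez Em1 -!catA. }
      have Em2 : m2 = [::] by destruct m2.
      have Eq0 : q = [::] by rewrite Em2 in Eq.
      have Ey't : y' = t by rewrite Ey' Ez Em1 Eal Em2 Eq0 /= !cats0.
      exists t', t', [::], g; split; first by apply: (Htr _ _ _ Hyy'); rewrite Ey't.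
      split; first by rewrite cats0.
      split; first by rewrite Eal Ede Em2.
      split; first by left.
      rewrite Eq0 in Hg; exact: Rk_mono Hg _ (leqnSn m).
    * case: (eqVneq al [::]) => [Eal|Nal].
      -- rewrite Eal /= in Ez; rewrite Eal /=.
         case: (eqVneq t y') => [Ety|Nty].
         ++ have Et2 : t2 = q by apply: (cat_injl (s := m1)); rewrite -Et -Ez Ety.
            rewrite Eg Et2 in Hg.
            have Hb := canw CANm Hg.
            exists t', t', [::], de; split; first by apply: (Htr _ _ _ Hyy'); rewrite -Ety.
            split; first by rewrite cats0.
            split => //; split; first by left.
            exact: Rk_mono Hb _ (leqnSn m).
         ++ exfalso.
            have Pm1 : piece R m1.
            { apply: (piece_of (x1 := [::]) (y1 := t2) (x2 := [::]) (y2 := q) Ht Hy').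
              - by rewrite Et.
              - by rewrite Ey' Ez.
              - by left; apply/eqP. }
            apply: (C2 HC Hy' Pm1 Pq); by rewrite Ey' Ez.
      -- have Ey'2 : y' = al ++ m1 ++ q by rewrite Ey' Ez -catA.
         have Hsz : size (@nil A) <> size al.
         { move=> /= H0; move: Nal; rewrite -size_eq0 -H0; by []. }
         have Pm1 : piece R m1.
         { apply: (piece_of (x1 := [::]) (y1 := t2) (x2 := al) (y2 := q) Ht Hy').
           - by rewrite Et.
           - exact: Ey'2.
           - by right. }
         have Hm : Rk R ((m1 ++ q) ++ b) m (t ++ de).
         { rewrite Et -!catA; have := Rk_pre m1 Hg; by rewrite Eg. }
         case: (classic (piece R (m1 ++ q))) => [Pmq|NPmq].
         ++ exists y', al, (m1 ++ q), (t' ++ de); split => //.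
            split; first exact: Ey'2.
            split => //; split => //.
            apply: Rk_step Hm _; by exists [::], de, t, t'.
         ++ exfalso.
            have H2 := Rk_sym Hsy Hm.
            have [t'' [z' [q' [g' [Rtt [Et'' [Ez' [Pq' _]]]]]]]] := INVm t de _ Ht H2.
            have Ht'' : rel_word R t'' by case: (relR Rtt).
            case: (catsplit Ez') => [[m3 [Ez'2 _]] | [m3 [Em1q _]]].
            ** apply: NPmq.
               apply: (piece_of (x1 := [::]) (y1 := m3 ++ q') (x2 := al) (y2 := [::]) Ht'' Hy').
               --- by rewrite Et'' Ez'2 /= -!catA.
               --- by rewrite Ey'2 cats0 catA.
               --- by right.
            ** have Pz' : piece R z'.
               { apply: (piece_of (x1 := [::]) (y1 := q') (x2 := al) (y2 := m3) Ht'' Hy').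
                 - by rewrite Et''.
                 - by rewrite Ey'2 Em1q.
                 - by right. }
               exact: (C2 HC Ht'' Pz' Pq' Et'').
Qed.

Lemma can_step (A : eqType) (R : presentation A) (HE : equivalence_presentation R)
  (HC : C_cond R 4) (HN : forall (a : A) r s, R (a :: r) (a :: s) -> r = s) n
  (IH : forall k, k < n -> INV R k /\ CAN R k) : CAN R n.
Proof.
case: HE => [Hrf [Hsy Htr]].
move=> a u v H.
case: (Rk_inv_first H) => [[->]|[k [w1 [En [Hs H1]]]]]; first by constructor.
have [INVk CANk] : INV R k /\ CAN R k by apply: IH; rewrite En.
rewrite En.
case: Hs => [al [de [x [y [Rxy [E1 E2]]]]]].
case: al E1 E2 => [|c al] /= E1 E2.
- case: x Rxy E1 => [|c x] Rxy E1.
  + by exfalso; apply: (C0 HC (relR Rxy).1).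
  + case: E1 => Eca Eu; rewrite -Eca in Rxy.
    rewrite E2 in H1.
    have [y' [z [q [g [Ryy' [Ey' [Ez [Pq Hg]]]]]]]] := INVk y de (a :: v) (relR Rxy).2 H1.
    have Hy' : rel_word R y' by case: (relR Ryy').
    case: z Ey' Ez => [|d z'] Ey' Ez.
    * by exfalso; apply: (C1 HC Hy'); rewrite Ey'.
    * case: Ez => Eda Ev.
      have Rx : R (a :: x) y' := Htr _ _ _ Rxy Ryy'.
      rewrite Ey' -Eda /= in Rx.
      have Ex := HN _ _ _ Rx.
      rewrite Eu Ev Ex -catA.
      exact: Rk_mono (Rk_pre z' Hg) _ (leqnSn k).
- case: E1 => Eca Eu.
  rewrite E2 -Eca /= in H1.
  have Hv := CANk _ _ _ H1.
  apply: Rk_cons Hv; rewrite Eu.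
  by exists al, de, x, y.
Qed.

Lemma all_n (A : eqType) (R : presentation A) (HE : equivalence_presentation R)
  (HC : C_cond R 4) (HN : forall (a : A) r s, R (a :: r) (a :: s) -> r = s) n :
  INV R n /\ CAN R n.
Proof.
elim/ltn_ind: n => n IH.
split.
- move=> y b w Hy H; exact: (inv_gen HE HC IH Hy H (leqnn n)).
- exact: (can_step HE HC HN IH).
Qed.

Theorem theorem5 (A : eqType) (R : presentation A) :
  equivalence_presentation R -> C_cond R 4 ->
  (left_cancellative R <->
   ~ (exists (a : A) (r s : seq A), r <> s /\ R (a :: r) (a :: s))).
Proof.
move=> HE HC; have HE' := HE; case: HE' => [Hrf [Hsy Htr]].
split.
- move=> LC [a [r [s [Nrs Rrs]]]].
  have Hc : cong R ([:: a] ++ r) ([:: a] ++ s).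
  { have := cong_step [::] [::] Rrs; by rewrite /= !cats0. }
  have Hrs := LC _ _ _ Hc.
  have Hw : rel_word R (a :: r) by case: (relR Rrs).
  have key : forall u v, cong R u v -> (u = r <-> v = r).
  { move=> u v; elim=> {u v}.
    - move=> u v x y Hxy; split => E; exfalso.
      + have Ex : a :: r = (a :: u) ++ x ++ v by rewrite -E.
        by have [E0 _] := rel_in_rel HC (relR Hxy).1 Hw Ex.
      + have Ex : a :: r = (a :: u) ++ y ++ v by rewrite -E.
        by have [E0 _] := rel_in_rel HC (relR Hxy).2 Hw Ex.
    - by [].
    - by move=> u v _ [H1 H2]; split.
    - move=> u v w _ [H1 H2] _ [H3 H4]; split; auto. }
  apply: Nrs; symmetry; by apply/(key _ _ Hrs).
- move=> HNE.
  have HN : forall (a : A) r s, R (a :: r) (a :: s) -> r = s.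
  { move=> a r s Hr; case: (eqVneq r s) => [//|/eqP Nrs].
    exfalso; apply: HNE; by exists a, r, s. }
  move=> w u v Hc.
  have [n Hn] := cong_Rk Hsy Hc.
  have [_ Hcan] := all_n HE HC HN n.
  exact: Rk_cong (canw Hcan Hn).
Qed.
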